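(* Define $\tau,\tau^<\colon\mathbb{D}([0,\infty),\mathbb{R})\to[0,\infty]$ by $\tau(f)=\inf\{t\ge0\colon f(t)\le0\}$ and $\tau^<(f)=\inf\{t\ge0\colon f(t)<0\}$. Let $C([0,\infty),\mathbb{R})$ be the set of continuous $f\in\mathbb{D}([0,\infty),\mathbb{R})$ and $$\mathbb{D}^*([0,\infty),\mathbb{R})=\big\{f\in\mathbb{D}([0,\infty),\mathbb{R})\colon f(t)\le0\ \forall t\ge\tau(f),\ \tau^<(f)=\tau(f)<\infty\big\}.$$ If $f_n\to f$ in $\mathbb{D}([0,\infty),\mathbb{R})$ (Skorokhod topology) and $f\in C([0,\infty),\mathbb{R})\cap\mathbb{D}^*([0,\infty),\mathbb{R})$, then $\tau(f_n)\to\tau(f)$.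
   Context: $\mathbb{D}([0,\infty),\mathbb{R})$ is the space of càdlàg functions $[0,\infty)\to\mathbb{R}$ with the Skorokhod ($J_1$) topology, $\inf\varnothing=\infty$. *)

(* Defs.v *)
From Stdlib Require Import Reals.
From Coquelicot Require Import Coquelicot.
Open Scope R_scope.

(* Paths are modelled as f : R -> R; only the values on [0,oo) matter. *)

Definition right_cont_nonneg (f : R -> R) : Prop :=
  forall t, 0 <= t -> forall eps, 0 < eps -> exists delta, 0 < delta /\
    forall s, t <= s < t + delta -> Rabs (f s - f t) < eps.

Definition left_limits (f : R -> R) : Prop :=
  forall t, 0 < t -> exists l : R, forall eps, 0 < eps -> exists delta, 0 < delta /\
    forall s, 0 <= s -> t - delta < s < t -> Rabs (f s - l) < eps.

Definition cadlag (f : R -> R) : Prop := right_cont_nonneg f /\ left_limits f.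

Definition cont_nonneg (f : R -> R) : Prop :=
  forall t, 0 <= t -> forall eps, 0 < eps -> exists delta, 0 < delta /\
    forall s, 0 <= s -> Rabs (s - t) < delta -> Rabs (f s - f t) < eps.

Definition time_change (lam : R -> R) : Prop :=
  cont_nonneg lam /\
  (forall s t, 0 <= s -> s < t -> lam s < lam t) /\
  (forall t, 0 <= t -> 0 <= lam t) /\
  (forall u, 0 <= u -> exists t, 0 <= t /\ lam t = u).

(* Skorokhod J1 convergence in D([0,oo),R) (Billingsley, Thm 16.2):
   there exist lam_n in Lambda_oo with sup_t |lam_n t - t| -> 0 and
   sup_{t <= T} |f_n (lam_n t) - f t| -> 0 for every T. *)
Definition skorokhod_cvg (fs : nat -> R -> R) (f : R -> R) : Prop :=
  exists lams : nat -> R -> R,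
    (forall n, time_change (lams n)) /\
    (forall eps, 0 < eps -> exists N, forall n, (N <= n)%nat ->
        forall t, 0 <= t -> Rabs (lams n t - t) <= eps) /\
    (forall T, 0 <= T -> forall eps, 0 < eps -> exists N, forall n, (N <= n)%nat ->
        forall t, 0 <= t <= T -> Rabs (fs n (lams n t) - f t) <= eps).

(* tau(f) = inf {t >= 0 | f t <= 0}, tau^<(f) = inf {t >= 0 | f t < 0}, inf of empty = +oo *)
Definition tau (f : R -> R) : Rbar := Glb_Rbar (fun t => 0 <= t /\ f t <= 0).
Definition tau_lt (f : R -> R) : Rbar := Glb_Rbar (fun t => 0 <= t /\ f t < 0).

Definition Dstar (f : R -> R) : Prop :=
  cadlag f /\
  (forall t, 0 <= t -> Rbar_le (tau f) (Finite t) -> f t <= 0) /\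
  tau_lt f = tau f /\ Rbar_lt (tau f) p_infty.

Definition Rbar_seq_cvg (u : nat -> Rbar) (l : Rbar) : Prop :=
  match l with
  | Finite x => forall eps, 0 < eps -> exists N, forall n, (N <= n)%nat ->
        Rbar_lt (Finite (x - eps)) (u n) /\ Rbar_lt (u n) (Finite (x + eps))
  | p_infty => forall M : R, exists N, forall n, (N <= n)%nat -> Rbar_lt (Finite M) (u n)
  | m_infty => forall M : R, exists N, forall n, (N <= n)%nat -> Rbar_lt (u n) (Finite M)
  end.

(* Main.v *)
Require Import Defs.
From Stdlib Require Import Reals Lra Lia Classical.
From Coquelicot Require Import Coquelicot.
Open Scope R_scope.

Lemma Rabs_le_inv x y : Rabs x <= y -> - y <= x <= y.
Proof. intros H. revert H; unfold Rabs; destruct (Rcase_abs x); lra. Qed.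

Lemma glb_lb (E : R -> Prop) x : E x -> Rbar_le (Glb_Rbar E) (Finite x).
Proof. intros H. destruct (Glb_Rbar_correct E) as [H1 _]. apply H1; auto. Qed.

Lemma glb_ge (E : R -> Prop) (b : R) : (forall x, E x -> b <= x) -> Rbar_le (Finite b) (Glb_Rbar E).
Proof. intros H. destruct (Glb_Rbar_correct E) as [_ H2]. apply H2. intros x Hx. simpl. auto. Qed.

Lemma tau_ge0 g : Rbar_le (Finite 0) (tau g).
Proof. unfold tau. apply glb_ge. intros x [H _]; auto. Qed.

Lemma cont_abs f : cont_nonneg f -> forall c, continuity_pt (fun x => f (Rabs x)) c.
Proof.
  intros Hf c. unfold continuity_pt, continue_in, limit1_in, limit_in. simpl. unfold R_dist.
  intros eps He. destruct (Hf (Rabs c) (Rabs_pos c) eps He) as [d [Hd Hs]].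
  exists d; split; auto. intros x [_ Hx]. apply Hs. apply Rabs_pos.
  eapply Rle_lt_trans; [apply Rabs_triang_inv2|]; auto.
Qed.

Theorem lemma3p3 (fs : nat -> R -> R) (f : R -> R) :
  (forall n, cadlag (fs n)) -> cadlag f ->
  skorokhod_cvg fs f ->
  cont_nonneg f -> Dstar f ->
  Rbar_seq_cvg (fun n => tau (fs n)) (tau f).
Proof.
  intros _ _ [lams [Htc [Hlam Hconv]]] Hc [_ [_ [Hlt Hfin]]].
  pose proof (tau_ge0 f) as H0.
  destruct (tau f) as [T| |] eqn:ET; simpl in Hfin, H0; try contradiction.
  simpl. intros eps He. 
  assert (Hup : exists N, forall n, (N <= n)%nat -> Rbar_lt (tau (fs n)) (Finite (T + eps))).
  { destruct (classic (exists t, 0 <= t /\ f t < 0 /\ t < T + eps/2)) as [[t [Ht0 [Hft Htl]]]|Hno].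
    - destruct (Hconv t Ht0 (- f t / 2)) as [N1 HN1]; [lra|].
      destruct (Hlam (eps/4)) as [N2 HN2]; [lra|].
      exists (Nat.max N1 N2). intros n Hn.
      assert (A1 := HN1 n ltac:(lia) t ltac:(lra)).
      assert (A2 := HN2 n ltac:(lia) t Ht0).
      destruct (Htc n) as [_ [_ [Hpos _]]].
      apply Rbar_le_lt_trans with (Finite (lams n t)).
      + unfold tau. apply glb_lb. split; auto.
        apply Rabs_le_inv in A1. lra.
      + simpl. apply Rabs_le_inv in A2. lra.
    - exfalso.
      assert (Hb : Rbar_le (Finite (T + eps/2)) (tau_lt f)).
      { unfold tau_lt. apply glb_ge. intros x [Hx0 Hfx].
        destruct (Rlt_or_le x (T + eps/2)) as [Hl|Hl]; auto.
        exfalso; apply Hno; eauto. }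
      rewrite Hlt in Hb. simpl in Hb. lra. }
  assert (Hlo : exists N, forall n, (N <= n)%nat -> Rbar_lt (Finite (T - eps)) (tau (fs n))).
  { destruct (Rlt_or_le (T - eps) 0) as [Hneg|Hpos0].
    - exists 0%nat. intros n _. eapply Rbar_lt_le_trans; [|apply tau_ge0]. simpl. lra.
    - set (S := T - eps/4).
      destruct (continuity_ab_min (fun x => f (Rabs x)) 0 S ltac:(unfold S; lra)
                  (fun c _ => cont_abs f Hc c)) as [mx [Hmin Hmx]].
      rewrite Rabs_pos_eq in Hmin by lra.
      assert (Hposf : forall t, 0 <= t -> t < T -> 0 < f t).
      { intros t Ht0 Htt. destruct (Rlt_or_le 0 (f t)) as [h|h]; auto.
        assert (Hle := glb_lb (fun t => 0 <= t /\ f t <= 0) t (conj Ht0 h)).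
        fold (tau f) in Hle. rewrite ET in Hle. simpl in Hle. lra. }
      set (m := f mx).
      assert (Hm : 0 < m) by (apply Hposf; unfold S in Hmx; lra).
      assert (Hmin' : forall c, 0 <= c <= S -> m <= f c).
      { intros c Hc'. assert (h := Hmin c Hc'). rewrite Rabs_pos_eq in h by lra. exact h. }
      destruct (Hconv S ltac:(unfold S; lra) (m/2)) as [N1 HN1]; [lra|].
      destruct (Hlam (eps/4)) as [N2 HN2]; [lra|].
      exists (Nat.max N1 N2). intros n Hn.
      apply Rbar_lt_le_trans with (Finite (T - eps/2)); [simpl; lra|].
      unfold tau. apply glb_ge. intros s [Hs0 Hfs].
      destruct (Rlt_or_le s (T - eps/2)) as [Hl|Hl]; [|lra].
      exfalso.
      destruct (Htc n) as [_ [_ [_ Hsurj]]].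
      destruct (Hsurj s Hs0) as [t [Ht0 Hts]].
      assert (A2 := HN2 n ltac:(lia) t Ht0). apply Rabs_le_inv in A2.
      assert (HtS : t <= S) by (unfold S; lra).
      assert (A1 := HN1 n ltac:(lia) t (conj Ht0 HtS)). apply Rabs_le_inv in A1.
      assert (h := Hmin' t (conj Ht0 HtS)). rewrite Hts in A1. lra. }
  destruct Hup as [N1 HN1]. destruct Hlo as [N2 HN2].
  exists (Nat.max N1 N2). intros n Hn. split; [apply HN2|apply HN1]; lia.
Qed.
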